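(* Let $\mathit{VI}$ be a finite set of variables with $\#\mathit{VI}=n$. If $j,k\in\mathbb{N}$ with $1\le j<k\le n$, then $\mathrm{MI}(\mathit{TSD}_k)\cap\mathit{TSD}_j=\mathrm{dAtoms}(\mathit{TSD}_j)$.
   Context: $\mathit{SG}=\wp(\mathit{VI})\setminus\{\emptyset\}$, $\mathit{SH}=\wp(\mathit{SG})$ ordered by inclusion. For $1\le m\le n$, $\rho_{\mathit{TSD}_m}(sh)=\{\,S\in\mathit{SG}\mid \forall T\subseteq S:\ \#T<m\implies S=\bigcup\{U\in sh\mid T\subseteq U\subseteq S\}\,\}$ and $\mathit{TSD}_m=\rho_{\mathit{TSD}_m}(\mathit{SH})$, a complete lattice under inclusion (meet = intersection, top $\mathit{SG}$). $\mathrm{MI}(C)$: meet-irreducible elements of $C$ ($x=y\wedge z\Rightarrow x=y$ or $x=z$); $\mathrm{dAtoms}(C)$: dual-atoms ($x\ne\top$ with $x\le y<\top\Rightarrow x=y$). *)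

(* Defs.v *)
From mathcomp Require Import all_boot.
Set Implicit Arguments. Unset Strict Implicit. Unset Printing Implicit Defensive.

Section TSD.
Variable VI : finType.

Definition SG : {set {set VI}} := [set S : {set VI} | S != set0].

Definition inSH (sh : {set {set VI}}) : bool := sh \subset SG.

Definition rhoTSD (m : nat) (sh : {set {set VI}}) : {set {set VI}} :=
  [set S in SG | [forall T : {set VI},
     ((T \subset S) && (#|T| < m)) ==>
       (S == \bigcup_(U in sh | (T \subset U) && (U \subset S)) U)]].

Definition TSD (m : nat) : {set {set {set VI}}} :=
  [set sh | inSH sh && [exists sh0, inSH sh0 && (rhoTSD m sh0 == sh)]].

(* Meet-irreducible elements of a family C of sets ordered by inclusion,
   whose meet is intersection and whose top is SG; following the usual
   convention the top element is excluded. *)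
Definition MI (C : {set {set {set VI}}}) : {set {set {set VI}}} :=
  [set x in C | (x != SG) &&
     [forall y in C, forall z in C, (x == y :&: z) ==> ((x == y) || (x == z))]].

Definition dAtoms (C : {set {set {set VI}}}) : {set {set {set VI}}} :=
  [set x in C | (x != SG) &&
     [forall y in C, ((x \subset y) && (y != SG)) ==> (x == y)]].
End TSD.

(* Main.v *)
Require Import Defs.
From mathcomp Require Import all_boot.
Set Implicit Arguments. Unset Strict Implicit. Unset Printing Implicit Defensive.

Section L.
Variable VI : finType.
Implicit Types (sh x y z : {set {set VI}}) (S T U : {set VI}).

Definition cov sh T S := \bigcup_(U in sh | (T \subset U) && (U \subset S)) U.

Lemma cov_sub sh T S : cov sh T S \subset S.
Proof. by apply/bigcupsP => U /andP[_ /andP[_ ->]]. Qed.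

Lemma rhoP m sh S : reflect (S \in SG VI /\ forall T, T \subset S -> #|T| < m -> S \subset cov sh T S)
  (S \in rhoTSD m sh).
Proof.
rewrite /rhoTSD [X in reflect _ X]inE; apply: (iffP andP) => [[HS /forallP H]|[HS H]]; split => //.
- move=> T TS Tm; move: (H T); rewrite TS Tm /= => /eqP E.
  by rewrite /cov -E.
- apply/forallP => T; apply/implyP => /andP[TS Tm]; rewrite eqEsubset.
  by rewrite (H T TS Tm) -/(cov sh T S) cov_sub.
Qed.

Lemma cov_mono sh sh' T S : sh \subset sh' -> cov sh T S \subset cov sh' T S.
Proof.
move=> ss; apply/bigcupsP => U /andP[Ush HU].
by apply: (bigcup_max U) => //; rewrite (subsetP ss).
Qed.

Lemma rho_ext m sh : sh \subset SG VI -> sh \subset rhoTSD m sh.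
Proof.
move=> shSG; apply/subsetP => S Ssh; apply/rhoP; split; first by rewrite (subsetP shSG).
move=> T TS _; apply: (bigcup_max S) => //; by rewrite Ssh TS subxx.
Qed.

Lemma rho_idem m sh : rhoTSD m (rhoTSD m sh) \subset rhoTSD m sh.
Proof.
apply/subsetP => S /rhoP[HS H]; apply/rhoP; split => // T TS Tm.
apply/subsetP => v vS; move: (subsetP (H T TS Tm) v vS) => /bigcupP[U /andP[Ur /andP[TU US]] vU].
case/rhoP: Ur => _ HU.
move: (subsetP (HU T TU Tm) v vU) => /bigcupP[V /andP[Vsh /andP[TV VU]] vV].
apply/bigcupP; exists V => //; rewrite Vsh TV /=; exact: subset_trans VU US.
Qed.

Lemma rho_SG m sh : rhoTSD m sh \subset SG VI.
Proof. by apply/subsetP => S /rhoP[]. Qed.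

Lemma TSDP m x : reflect (x \subset SG VI /\ rhoTSD m x \subset x) (x \in TSD VI m).
Proof.
rewrite /TSD [X in reflect _ X]inE /inSH; apply: (iffP andP) => [[xSG /existsP[sh0 /andP[_ /eqP E]]]|[xSG H]].
- by split => //; rewrite -E rho_idem.
- split => //; apply/existsP; exists x; rewrite xSG eqEsubset H /=; exact: rho_ext.
Qed.

Lemma TSD_mono j k x : j <= k -> x \in TSD VI j -> x \in TSD VI k.
Proof.
move=> jk /TSDP[xSG H]; apply/TSDP; split => //.
apply: subset_trans H; apply/subsetP => S /rhoP[HS HH]; apply/rhoP; split => // T TS Tj.
apply: HH => //; exact: leq_trans Tj jk.
Qed.

Lemma add_k j k x S1 : j < k -> x \in TSD VI j -> S1 \in SG VI -> S1 |: x \in TSD VI k.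
Proof.
move=> jk /TSDP[xSG H] S1SG; apply/TSDP; split.
  by rewrite subUset sub1set S1SG.
apply/subsetP => S Sr; case: (boolP (S \in S1 |: x)) => // Snot; exfalso.
have Sx : S \notin x by move: Snot; rewrite in_setU negb_or => /andP[].
have SS1 : S != S1 by move: Snot; rewrite in_setU negb_or in_set1 => /andP[].
move/rhoP: (Sr) => [HS HH].
have : S \in rhoTSD j x.
  apply/rhoP; split => // T TS Tj.
  pose T' := if [pick a in S :\: S1] is Some a then a |: T else T.
  have T'S : T' \subset S.
    rewrite /T'; case: pickP => [a|] //; rewrite inE => /andP[_ aS].
    by rewrite subUset sub1set aS.
  have TT' : T \subset T'.
    by rewrite /T'; case: pickP => [a|] //; rewrite subsetUr.
  have T'k : #|T'| < k.
    apply: leq_ltn_trans jk; rewrite /T'; case: pickP => [a|] // _.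
      by rewrite cardsU1; apply: leq_trans (leq_add (leq_b1 _) (leqnn _)) _; rewrite add1n.
    exact: ltnW.
  apply: subset_trans (HH T' T'S T'k) _.
  apply/bigcupsP => U /andP[Ux /andP[TU US]].
  move: Ux; rewrite in_setU in_set1 => /orP[/eqP UE|Ux]; last first.
    by apply: (bigcup_max U) => //; rewrite Ux US (subset_trans TT' TU).
  exfalso; subst U; move: TU; rewrite /T'; case: pickP => [a|].
    rewrite inE => /andP[aS1 _]; rewrite subUset sub1set => /andP[aU _].
    by rewrite aU in aS1.
  move=> none _; move/negP: SS1 => SS1; apply: SS1; rewrite eqEsubset US andbT.
  apply/subsetP => v vS; apply/negPn/negP => vS1.
  by move: (none v); rewrite inE vS1 vS.
by move=> /(subsetP H); apply/negP.
Qed.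

Lemma add_max m x S1 : x \in TSD VI m -> S1 \in SG VI -> S1 \notin x ->
  (forall S, S \in SG VI -> S \notin x -> S1 \subset S -> S = S1) ->
  S1 |: x \in TSD VI m.
Proof.
move=> /TSDP[xSG H] S1SG S1x Hmax; apply/TSDP; split.
  by rewrite subUset sub1set S1SG.
apply/subsetP => S Sr; case: (boolP (S \in S1 |: x)) => // Snot; exfalso.
have Sx : S \notin x by move: Snot; rewrite in_setU negb_or => /andP[].
have SS1 : S != S1 by move: Snot; rewrite in_setU negb_or in_set1 => /andP[].
move/rhoP: (Sr) => [HS HH].
have : S \in rhoTSD m x.
  apply/rhoP; split => // T TS Tj.
  apply: subset_trans (HH T TS Tj) _.
  apply/bigcupsP => U /andP[Ux /andP[TU US]].
  move: Ux; rewrite in_setU in_set1 => /orP[/eqP UE|Ux]; last first.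
    by apply: (bigcup_max U) => //; rewrite Ux US TU.
  by subst U; rewrite (Hmax S HS Sx US) eqxx in SS1.
by move=> /(subsetP H); apply/negP.
Qed.

Lemma exists_max x : x \subset SG VI -> x != SG VI ->
  exists S1, [/\ S1 \in SG VI, S1 \notin x &
  (forall S, S \in SG VI -> S \notin x -> S1 \subset S -> S = S1)].
Proof.
move=> xSG xne.
have [S0 S0in] : exists S0, S0 \in SG VI :\: x.
  apply/set0Pn; apply: contra xne; rewrite setD_eq0 => H.
  by rewrite eqEsubset xSG H.
case: (arg_maxnP (fun S => #|S|) S0in) => S1 S1in Hm.
have : S1 \in SG VI :\: x := S1in. rewrite inE => /andP[S1x S1SG].
exists S1; split => // S SSG Sx S1S.
have : S \in SG VI :\: x by rewrite inE Sx SSG.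
move=> /Hm Hc; apply/eqP; rewrite eq_sym eqEcard S1S /=; exact: Hc.
Qed.

Lemma one_missing x y S1 : x \subset y -> y \subset SG VI -> S1 \notin x ->
  (forall S, S \in SG VI -> S \notin x -> S = S1) -> y = x \/ y = SG VI.
Proof.
move=> xy ySG S1x H.
case: (boolP (S1 \in y)) => S1y.
  right; apply/eqP; rewrite eqEsubset ySG /=; apply/subsetP => S SSG.
  case: (boolP (S \in x)) => Sx; first by rewrite (subsetP xy).
  by rewrite (H S SSG Sx).
left; apply/eqP; rewrite eqEsubset xy andbT; apply/subsetP => S Sy.
apply/negPn/negP => Sx; move: (H S (subsetP ySG S Sy) Sx) => E.
by rewrite -E Sy in S1y.
Qed.

End L.

Theorem corollary4p6 (VI : finType) (j k : nat) :
  1 <= j -> j < k -> k <= #|VI| ->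
  MI (TSD VI k) :&: TSD VI j = dAtoms (TSD VI j).
Proof.
move=> j1 jk kn; apply/setP => x; rewrite in_setI /MI /dAtoms [x \in [set _ in TSD VI k | _]]inE [x \in [set _ in TSD VI j | _]]inE.
apply/idP/idP.
- move=> /andP[/and3P[xk xSG /forallP Hmi] xj].
  have xSG' : x \subset SG VI. by move/TSDP: xj => [].
  have uniq : forall S1 S2, S1 \in SG VI -> S1 \notin x -> S2 \in SG VI -> S2 \notin x -> S1 = S2.
    move=> S1 S2 S1SG S1x S2SG S2x; apply/eqP/negPn/negP => ne.
    have E : x = (S1 |: x) :&: (S2 |: x).
      apply/setP => S; rewrite !inE; case: (boolP (S \in x)) => Sx; first by rewrite !orbT.
      rewrite !orbF; apply/esym/negbTE; apply/negP => /andP[/eqP e1 /eqP e2].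
      by subst; rewrite eqxx in ne.
    move: (Hmi (S1 |: x)); rewrite (add_k jk xj S1SG) /= => /forallP /(_ (S2 |: x)).
    rewrite (add_k jk xj S2SG) /= -E eqxx /= => /orP[] /eqP e.
      by move: S1x; rewrite {1}e in_setU in_set1 eqxx.
    by move: S2x; rewrite {1}e in_setU in_set1 eqxx.
  case: (exists_max xSG' xSG) => S1 [S1SG S1x _].
  rewrite xj xSG /=; apply/forallP => y; apply/implyP => yj; apply/implyP => /andP[xy yne].
  have ySG : y \subset SG VI by case/TSDP: yj.
  case: (one_missing xy ySG S1x (fun S h1 h2 => uniq S S1 h1 h2 S1SG S1x)) => e.
    by rewrite e eqxx.
  by rewrite e eqxx in yne.
- move=> /and3P[xj xSG /forallP Hda].
  have xSG' : x \subset SG VI by case/TSDP: xj.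
  rewrite xj andbT (TSD_mono (ltnW jk) xj) xSG /=.
  case: (exists_max xSG' xSG) => S1 [S1SG S1x Hmax].
  have Hj := add_max xj S1SG S1x Hmax.
  have xS1 : x \subset S1 |: x by apply: subsetUr.
  have full : S1 |: x = SG VI.
    move: (Hda (S1 |: x)); rewrite Hj xS1 /= => /implyP H.
    apply/eqP; apply/negPn/negP => ne; move: (H ne) => /eqP e.
    by move: S1x; rewrite {1}e in_setU in_set1 eqxx.
  have Hone : forall S, S \in SG VI -> S \notin x -> S = S1.
    move=> S; rewrite -full in_setU in_set1 => /orP[/eqP //|->] //.
  apply/forallP => y; apply/implyP => yk; apply/forallP => z; apply/implyP => zk.
  apply/implyP => /eqP e.
  have ySG : y \subset SG VI by case/TSDP: yk.
  have zSG : z \subset SG VI by case/TSDP: zk.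
  have xy : x \subset y by rewrite e subsetIl.
  have xz : x \subset z by rewrite e subsetIr.
  case: (one_missing xy ySG S1x Hone) => ey; first by rewrite ey eqxx.
  case: (one_missing xz zSG S1x Hone) => ez; first by rewrite ez eqxx orbT.
  by move: xSG; rewrite e ey ez setIid eqxx.
Qed.
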